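(* Let $(A:B)$ be a bipartition of a set of $n$ qubits, let $\rho=|\psi\rangle\langle\psi|$ be a pure $n$-qubit state, let $\rho_A$ be its reduced state on $A$, and let $r$ be the Schmidt rank of $|\psi\rangle$ with respect to $(A:B)$. Then for any $n$-qubit Pauli string $P=P_A\otimes P_B$ (with $P_A$ labelled by $x_A$), $$p_\psi(x_A)=\frac{\mathrm{tr}(\rho_AP_A\rho_AP_A)}{2^{|A|}}\ge\frac{\mathrm{tr}(\rho P)^2}{2^{|A|}r}.$$
   Context: Pauli strings are labelled by $x\in\{0,1\}^{2n}$ via $P_x=i^{v\cdot w}(X^{v_1}Z^{w_1})\otimes\cdots\otimes(X^{v_n}Z^{w_n})$ for $x=(v_1,w_1,\dots,v_n,w_n)$, writing $x=(x_A,x_B)$ for the pairs $(v_i,w_i)$ belonging to qubits in $A$ and in $B$, so that $P_x=P_{x_A}\otimes P_{x_B}$. The Pauli distribution of a pure state is $p_\psi(x)=\mathrm{tr}(\psi P_x)^2/2^n$, and its marginal is $p_\psi(x_A)=\sum_{x_B}p_\psi(x_A,x_B)$. *)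

(* Defs.v *)
(* Amplitudes live in an arbitrary numClosedFieldType C
   (e.g. the complex numbers); 'i is its imaginary unit and z^* conjugation. *)
From HB Require Import structures.
From mathcomp Require Import all_boot all_order all_algebra.
Set Implicit Arguments. Unset Strict Implicit. Unset Printing Implicit Defensive.
Import Order.TTheory GRing.Theory Num.Theory.
Local Open Scope ring_scope.

Section Qubits.
Variable C : numClosedFieldType.

(* computational-basis labels of a register whose qubits are indexed by I *)
Definition bits (I : finType) := {ffun I -> bool}.

(* operators on the register I, given by their matrix entries <s|M|t> *)
Definition op (I : finType) := bits I -> bits I -> C.

Definition opmul (I : finType) (M N : op I) : op I :=
  fun s t => \sum_(u : bits I) M s u * N u t.

Definition optr (I : finType) (M : op I) : C := \sum_(s : bits I) M s s.

Definition plabel (I : finType) := {ffun I -> bool * bool}.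

(* single-qubit entry  <s| i^{v w} X^v Z^w |t> = i^{vw} [s = t xor v] (-1)^{w t} *)
Definition pauli1 (vw : bool * bool) (s t : bool) : C :=
  (if vw.1 && vw.2 then 'i else 1) *
  (if s == xorb t vw.1 then 1 else 0) *
  (if vw.2 && t then -1 else 1).

(* P_x = i^{v.w} (X^{v_1}Z^{w_1}) (x) ... (x) (X^{v_n}Z^{w_n}) *)
Definition pauli (I : finType) (x : plabel I) : op I :=
  fun s t => \prod_(i : I) pauli1 (x i) (s i) (t i).

Definition pure (I : finType) (psi : bits I -> C) : op I :=
  fun s t => psi s * (psi t)^*.

Definition normalized (I : finType) (psi : bits I -> C) : Prop :=
  \sum_(s : bits I) psi s * (psi s)^* = 1.

Definition pauli_distr (I : finType) (psi : bits I -> C) (x : plabel I) : C :=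
  (optr (opmul (pure psi) (pauli x))) ^+ 2 / 2%:R ^+ #|I|.

Definition sub (I : finType) (A : {set I}) := {i : I | i \in A}.

Definition prestr (I : finType) (A : {set I}) (x : plabel I) : plabel (sub A) :=
  [ffun i : sub A => x (val i)].

Definition pauli_marg (I : finType) (psi : bits I -> C) (A : {set I})
    (xA : plabel (sub A)) : C :=
  \sum_(y : plabel I | prestr A y == xA) pauli_distr psi y.

Definition merge (I : finType) (A : {set I}) (a : bits (sub A))
    (b : bits (sub (~: A))) : bits I :=
  [ffun j => match (insub j : option (sub A)) with
             | Some i => a i
             | None => match (insub j : option (sub (~: A))) with
                       | Some k => b k
                       | None => false
                       end
             end].

Definition ptraceB (I : finType) (A : {set I}) (M : op I) : op (sub A) :=
  fun a a' => \sum_(b : bits (sub (~: A))) M (merge a b) (merge a' b).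

Definition reduced (I : finType) (psi : bits I -> C) (A : {set I}) : op (sub A) :=
  @ptraceB I A (pure psi).

Definition coef_mx (I : finType) (psi : bits I -> C) (A : {set I}) :
    'M[C]_(#|{: bits (sub A)}|, #|{: bits (sub (~: A))}|) :=
  \matrix_(i, j) psi (merge (enum_val i) (enum_val j)).

(* Schmidt rank = number of nonzero Schmidt coefficients
                = rank of the coefficient matrix *)
Definition schmidt_rank (I : finType) (psi : bits I -> C) (A : {set I}) : nat :=
  \rank (coef_mx psi A).

End Qubits.
Arguments pauli {C I} x _ _.
Arguments pure {C I} psi _ _.
Arguments prestr {I} A x.
Arguments pauli_marg {C I} psi A xA.
Arguments merge {I A} a b.
Arguments ptraceB {C I} A M _ _.
Arguments reduced {C I} psi A _ _.
Arguments coef_mx {C I} psi A.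
Arguments schmidt_rank {C I} psi A.

(* Main.v *)
Require Import Defs.
From HB Require Import structures.
From mathcomp Require Import all_boot all_order all_algebra.
From mathcomp Require Import ring spectral.
Set Implicit Arguments. Unset Strict Implicit. Unset Printing Implicit Defensive.
Import Order.TTheory GRing.Theory Num.Theory.
Local Open Scope ring_scope.

Section Infra.
Variable I : finType.
Variable A : {set I}.

Definition gmerge (T : Type) (a : {ffun sub A -> T}) (b : {ffun sub (~: A) -> T}) (d : T)
  : {ffun I -> T} :=
  [ffun j => match (insub j : option (sub A)) with
             | Some i => a i
             | None => match (insub j : option (sub (~: A))) with
                       | Some k => b k
                       | None => d
                       end
             end].

Definition grestr (T : Type) (B : {set I}) (f : {ffun I -> T}) : {ffun sub B -> T} :=
  [ffun i : sub B => f (val i)].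

Lemma merge_gmerge (a : bits (sub A)) b : Defs.merge a b = gmerge a b false.
Proof. by []. Qed.

Lemma gmergeA T a b d (i : sub A) : @gmerge T a b d (val i) = a i.
Proof. by rewrite ffunE valK. Qed.

Lemma gmergeB T a b d (i : sub (~: A)) : @gmerge T a b d (val i) = b i.
Proof.
rewrite ffunE insubN ?valK //.
by have := valP i; rewrite inE.
Qed.

Lemma gmergeK1 T a b d : grestr A (@gmerge T a b d) = a.
Proof. by apply/ffunP => i; rewrite ffunE gmergeA. Qed.

Lemma gmergeK2 T a b d : grestr (~: A) (@gmerge T a b d) = b.
Proof. by apply/ffunP => i; rewrite ffunE gmergeB. Qed.

Lemma gmerge_restr T d (f : {ffun I -> T}) : gmerge (grestr A f) (grestr (~: A) f) d = f.
Proof.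
apply/ffunP => j; rewrite ffunE.
case: insubP => [i _ <-|Hn]; first by rewrite ffunE.
case: insubP => [k _ <-|Hn']; first by rewrite ffunE.
by move: Hn'; rewrite inE Hn.
Qed.

Lemma sum_split (R : nmodType) (T : finType) d (F : {ffun I -> T} -> R) :
  \sum_f F f = \sum_(a : {ffun sub A -> T}) \sum_(b : {ffun sub (~: A) -> T}) F (gmerge a b d).
Proof.
rewrite pair_bigA /= (reindex (fun p => gmerge p.1 p.2 d)) /=; first by [].
exists (fun f => (grestr A f, grestr (~: A) f)) => [[a b] _|f _].
  by rewrite gmergeK1 gmergeK2.
by rewrite gmerge_restr.
Qed.

Lemma sum_marg (R : nmodType) (T : finType) d (F : {ffun I -> T} -> R) xA :
  \sum_(f | grestr A f == xA) F f = \sum_(b : {ffun sub (~: A) -> T}) F (gmerge xA b d).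
Proof.
rewrite big_mkcond (sum_split d) /=.
rewrite (bigD1 xA) //= [X in _ + X]big1 ?addr0.
  by apply: eq_bigr => b _; rewrite gmergeK1 eqxx.
move=> a /negbTE Ha; apply: big1 => b _; by rewrite gmergeK1 Ha.
Qed.

Lemma prod_split (R : comPzSemiRingType) (F : I -> R) :
  \prod_i F i = \prod_(i : sub A) F (val i) * \prod_(i : sub (~: A)) F (val i).
Proof.
rewrite (bigID (mem A)) /=; congr (_ * _).
  by rewrite big_sub.
rewrite -big_sub; apply: eq_bigl => i; by rewrite !inE.
Qed.

End Infra.

Ltac simp := repeat (first [rewrite mulr1 | rewrite mul1r | rewrite mulr0 | rewrite mul0r | rewrite mulrN | rewrite mulNr | rewrite opprK | rewrite addr0 | rewrite add0r | rewrite oppr0 | rewrite mulrNN]).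

Section P1.
Variable C : numClosedFieldType.

Lemma p1_herm vw s t : (pauli1 C vw s t)^* = pauli1 C vw t s.
Proof.
case: vw => [[] []]; case: s; case: t; rewrite /pauli1 /= ?mulr1 ?mul1r ?mulr0 ?mul0r ?mulrN ?mulNr ?opprK ?rmorphN ?rmorph1 ?rmorph0 //.
- rewrite mulr1. rewrite conjCi. done.
- rewrite mulr1. have h : forall z : C, (GRing.RMorphism.sort (Num.Num_conj__canonical__GRing_RMorphism C)) z = z^* by []. rewrite h conjCi opprK. done.
Qed.

Lemma p1_unit vw s u : \sum_t pauli1 C vw s t * pauli1 C vw t u = if s == u then 1 else 0.
Proof.
rewrite big_bool.
case: vw => [[] []]; case: s; case: u; rewrite /pauli1 /= ?mulr1 ?mul1r ?mulr0 ?mul0r ?mulrN ?mulNr ?opprK ?addr0 ?add0r //.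
all: simp; rewrite // -expr2 sqrCi ?opprK //.
Qed.

Lemma p1_compl s1 s2 s3 s4 :
  \sum_(vw : bool * bool) pauli1 C vw s1 s2 * pauli1 C vw s3 s4 =
  if (s1 == s4) && (s2 == s3) then 2%:R else 0.
Proof.
transitivity (\sum_v \sum_w (pauli1 C (v,w) s1 s2 * pauli1 C (v,w) s3 s4)).
  by rewrite pair_bigA; apply: eq_bigr => -[v w] _.
rewrite !big_bool /=.
case: s1; case: s2; case: s3; case: s4; rewrite /pauli1 /=; simp; rewrite //.
all: rewrite -?expr2 ?sqrCi ?opprK ?addNr //.
Qed.
End P1.

Section PJ.
Variable C : numClosedFieldType.
Variable J : finType.

Lemma prod_ind (P : pred J) (c : C) :
  \prod_i (if P i then c else 0) = if [forall i, P i] then c ^+ #|J| else 0.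
Proof.
case: ifP => [/forallP HP|/negbT]; first by rewrite (eq_bigr (fun _ => c)) ?prodr_const // => i _; rewrite HP.
rewrite negb_forall => /existsP [i Hi].
by rewrite (bigD1 i) //= (negbTE Hi) mul0r.
Qed.

Lemma ffun_eq_forall (T : eqType) (f g : {ffun J -> T}) : [forall i, f i == g i] = (f == g).
Proof.
apply/forallP/eqP => [H|->//]; by apply/ffunP => i; apply/eqP.
Qed.

Lemma pauli_herm (x : plabel J) s t : (pauli (C:=C) x s t)^* = pauli x t s.
Proof. by rewrite /pauli rmorph_prod; apply: eq_bigr => i _; exact: p1_herm. Qed.

Lemma pauli_unit (x : plabel J) s u :
  \sum_t pauli (C:=C) x s t * pauli x t u = if s == u then 1 else 0.
Proof.
rewrite /pauli.
under eq_bigr do rewrite -big_split /=.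
rewrite -(bigA_distr_bigA (fun i b => pauli1 C (x i) (s i) b * pauli1 C (x i) b (u i))) /=.
under eq_bigr do rewrite p1_unit.
rewrite prod_ind ffun_eq_forall; case: ifP => //; by rewrite expr1n.
Qed.

Lemma pauli_compl s1 s2 s3 s4 :
  \sum_(z : plabel J) pauli (C:=C) z s1 s2 * pauli z s3 s4 =
  if (s1 == s4) && (s2 == s3) then 2%:R ^+ #|J| else 0.
Proof.
rewrite /pauli.
under eq_bigr do rewrite -big_split /=.
rewrite -(bigA_distr_bigA (fun i vw => pauli1 C vw (s1 i) (s2 i) * pauli1 C vw (s3 i) (s4 i))) /=.
under eq_bigr do rewrite p1_compl.
rewrite prod_ind; congr (if _ then _ else _).
apply/forallP/andP => [H|[/eqP -> /eqP ->] i]; last by rewrite !eqxx.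
by split; apply/eqP/ffunP => i; have /andP[/eqP ? /eqP ?] := H i.
Qed.
End PJ.

Lemma conjE (C : numClosedFieldType) (z : C) :
  GRing.RMorphism.sort (Num.Num_conj__canonical__GRing_RMorphism C) z = z^*.
Proof. by []. Qed.

Section CS.
Variable C : numClosedFieldType.
Variable K : finType.

Lemma sum_prod (f g : K -> C) : \sum_i \sum_j f i * g j = (\sum_i f i) * (\sum_j g j).
Proof. by rewrite mulr_suml; apply: eq_bigr => i _; rewrite mulr_sumr. Qed.

Lemma CS (x y : K -> C) :
  (\sum_i x i * y i) * (\sum_i x i * y i)^* <=
  (\sum_i x i * (x i)^*) * (\sum_i y i * (y i)^*).
Proof.
set D := \sum_i \sum_j (x i * (y j)^* - x j * (y i)^*) * (x i * (y j)^* - x j * (y i)^*)^*.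
have D0 : 0 <= D by apply: sumr_ge0 => i _; apply: sumr_ge0 => j _; exact: mul_conjC_ge0.
have E : forall i j, (x i * (y j)^* - x j * (y i)^*) * (x i * (y j)^* - x j * (y i)^*)^* =
   x i * (x i)^* * (y j * (y j)^*) + x j * (x j)^* * (y i * (y i)^*)
   - ((x i * y i) * ((x j)^* * (y j)^*) + (x j * y j) * ((x i)^* * (y i)^*)).
  by move=> i j; rewrite rmorphB !rmorphM !conjE !conjCK; ring.
have ED : D = 2%:R * ((\sum_i x i * (x i)^*) * (\sum_i y i * (y i)^*)
                  - (\sum_i x i * y i) * (\sum_i x i * y i)^*).
  rewrite /D; under eq_bigr do under eq_bigr do rewrite E.
  under eq_bigr do rewrite sumrB big_split /= big_split /=.
  rewrite sumrB big_split /= big_split /=.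
  rewrite !sum_prod (exchange_big _ _ _ _ _ (fun i j => x j * (x j)^* * (y i * (y i)^*))) /=.
  rewrite (exchange_big _ _ _ _ _ (fun i j => x j * y j * ((x i)^* * (y i)^*))) /=.
  rewrite !sum_prod rmorph_sum.
  under [X in _ = _ * (_ - _ * X)]eq_bigr do rewrite rmorphM.
  ring.
move: D0; rewrite ED pmulr_rge0 ?ltr0n // subr_ge0 //.
Qed.
End CS.

Local Open Scope sesquilinear_scope.

Section MX.
Variable C : numClosedFieldType.

Lemma adjM m n p (X : 'M[C]_(m, n)) (Y : 'M[C]_(n, p)) : (X *m Y)^t* = Y^t* *m X^t*.
Proof. by rewrite trmx_mul map_mxM. Qed.

Lemma adjB m n (X Y : 'M[C]_(m, n)) : (X - Y)^t* = X^t* - Y^t*.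
Proof. by rewrite linearB map_mxB. Qed.

Lemma adj1 n : (1%:M : 'M[C]_n)^t* = 1%:M.
Proof. by rewrite trmx1 map_mx1. Qed.

Lemma tr_adj m n (Z : 'M[C]_(m, n)) : \tr (Z *m Z^t*) = \sum_i \sum_j Z i j * (Z i j)^*.
Proof. by rewrite /mxtrace; apply: eq_bigr => i _; rewrite mxE; apply: eq_bigr => j _; rewrite !mxE. Qed.

Lemma tr_adj_ge0 m n (Z : 'M[C]_(m, n)) : 0 <= \tr (Z *m Z^t*).
Proof. by rewrite tr_adj; apply: sumr_ge0 => i _; apply: sumr_ge0 => j _; exact: mul_conjC_ge0. Qed.

Lemma trCS p q (X : 'M[C]_(p, q)) (Y : 'M[C]_(q, p)) :
  \tr (X *m Y) * (\tr (X *m Y))^* <= \tr (X *m X^t*) * \tr (Y *m Y^t*).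
Proof.
have e1 : \tr (X *m Y) = \sum_(k : 'I_p * 'I_q) X k.1 k.2 * Y k.2 k.1.
  by rewrite -(pair_bigA _ (fun i j => X i j * Y j i)); apply: eq_bigr => i _; rewrite mxE.
have e2 : \tr (X *m X^t*) = \sum_(k : 'I_p * 'I_q) X k.1 k.2 * (X k.1 k.2)^*.
  by rewrite tr_adj -(pair_bigA _ (fun i j => X i j * (X i j)^*)).
have e3 : \tr (Y *m Y^t*) = \sum_(k : 'I_p * 'I_q) Y k.2 k.1 * (Y k.2 k.1)^*.
  by rewrite tr_adj exchange_big -(pair_bigA _ (fun i j => Y j i * (Y j i)^*)).
rewrite e1 e2 e3; exact: (CS (fun k => X k.1 k.2) (fun k => Y k.2 k.1)).
Qed.

Lemma bessel r n m (V : 'M[C]_(r, n)) (X : 'M[C]_(n, m)) :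
  V *m V^t* = 1%:M ->
  \tr ((V *m X) *m (V *m X)^t*) <= \tr (X *m X^t*).
Proof.
move=> VV.
set Pi := V^t* *m V.
have PiH : Pi^t* = Pi by rewrite /Pi adjM trmxCK.
have PiP : Pi *m Pi = Pi by rewrite /Pi mulmxA -(mulmxA _ V) VV mulmx1.
set Q := 1%:M - Pi.
have QH : Q^t* = Q by rewrite /Q adjB adj1 PiH.
have QQ : Q *m Q = Q by rewrite /Q mulmxBl mul1mx mulmxBr mulmx1 PiP subrr subr0.
have := tr_adj_ge0 (Q *m X).
have -> : (Q *m X) *m (Q *m X)^t* = (Q *m X) *m (X^t* *m Q) by rewrite adjM QH.
rewrite mxtrace_mulC.
have -> : (X^t* *m Q) *m (Q *m X) = X^t* *m X - (V *m X)^t* *m (V *m X).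
  by rewrite -mulmxA (mulmxA Q Q X) QQ /Q mulmxBl mul1mx mulmxBr adjM /Pi !mulmxA.
rewrite raddfB /= subr_ge0 mxtrace_mulC [X in _ <= X]mxtrace_mulC //.
Qed.
End MX.

Section Enum.
Variable C : numClosedFieldType.
Variable T : finType.

Lemma sum_enum (T0 : finType) (R : nmodType) (f : T0 -> R) : \sum_a f a = \sum_(i < #|{:T0}|) f (enum_val i).
Proof.
rewrite (reindex (@enum_val T0 (mem {:T0}))) //.
by exists (@enum_rank T0) => [i _|a _]; rewrite ?enum_valK ?enum_rankK.
Qed.

Definition mx (B : op C T) : 'M[C]_#|{: bits T}| := \matrix_(i, j) B (enum_val i) (enum_val j).

Lemma mx_mul (B D : op C T) : mx (opmul B D) = mx B *m mx D.
Proof. by apply/matrixP => i j; rewrite !mxE /opmul sum_enum; apply: eq_bigr => k _; rewrite !mxE. Qed.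

Lemma mx_tr (B : op C T) : optr B = \tr (mx B).
Proof. by rewrite /optr sum_enum; apply: eq_bigr => i _; rewrite mxE. Qed.
End Enum.

Section Main.
Variable C : numClosedFieldType.
Variable I : finType.
Variable A : {set I}.
Variable psi : bits I -> C.

Local Notation M := (coef_mx psi A).

Lemma ME i j : M i j = psi (gmerge (enum_val i) (enum_val j) false).
Proof. by rewrite mxE. Qed.

Lemma pauli_split (y : plabel I) a b a' b' :
  pauli (C:=C) y (gmerge a b false) (gmerge a' b' false) =
  pauli (prestr A y) a a' * pauli (prestr (~: A) y) b b'.
Proof.
rewrite /pauli (prod_split A); congr (_ * _); apply: eq_bigr => i _;
  by rewrite ?gmergeA ?gmergeB ffunE.
Qed.

Lemma t_expr (y : plabel I) :
  optr (opmul (pure psi) (pauli (C:=C) y)) =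
  \tr (M^t* *m mx (pauli (prestr A y)) *m M *m (mx (pauli (prestr (~: A) y)))^T).
Proof.
rewrite /optr /opmul /pure (sum_split A false).
under eq_bigr do under eq_bigr do rewrite (sum_split A false).
under eq_bigr do under eq_bigr do under eq_bigr do under eq_bigr do rewrite pauli_split.
rewrite sum_enum.
under eq_bigr do rewrite sum_enum.
under eq_bigr do under eq_bigr do rewrite sum_enum.
under eq_bigr do under eq_bigr do under eq_bigr do rewrite sum_enum.
(* order i j i' j' -> j' j i i' *)
under eq_bigr do under eq_bigr do rewrite exchange_big.
rewrite exchange_big.
under eq_bigr do rewrite exchange_big.
rewrite exchange_big.
rewrite /mxtrace; apply: eq_bigr => j' _; rewrite mxE.
apply: eq_bigr => j _; rewrite mxE big_distrl; apply: eq_bigr => i _.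
rewrite mxE big_distrl big_distrl; apply: eq_bigr => i' _.
rewrite !mxE /= !merge_gmerge; ring.
Qed.

Lemma mx_reduced : mx (reduced psi A) = M *m M^t*.
Proof.
apply/matrixP => i j; rewrite !mxE /reduced /ptraceB /pure sum_enum.
by apply: eq_bigr => k _; rewrite !mxE.
Qed.

Lemma S_expr (P : op C (sub A)) :
  optr (opmul (opmul (reduced psi A) P) (opmul (reduced psi A) P)) =
  \tr ((M^t* *m mx P *m M) *m (M^t* *m mx P *m M)).
Proof.
rewrite mx_tr !mx_mul mx_reduced.
by rewrite !mulmxA mxtrace_mulC !mulmxA mxtrace_mulC !mulmxA.
Qed.

Lemma t_real (y : plabel I) :
  (optr (opmul (pure psi) (pauli (C:=C) y)))^* = optr (opmul (pure psi) (pauli (C:=C) y)).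
Proof.
rewrite /optr /opmul /pure rmorph_sum exchange_big; apply: eq_bigr => u _.
rewrite rmorph_sum; apply: eq_bigr => s _.
rewrite !rmorphM !conjE conjCK pauli_herm; ring.
Qed.

End Main.

Section P1.
Variable C : numClosedFieldType.

Lemma sum2_delta m (g : 'I_m -> 'I_m -> C) a b c :
  \sum_k' \sum_k g k' k * (if (a == k) && (b == k') then c else 0) = g b a * c.
Proof.
rewrite (bigD1 b) //= [X in _ + X]big1 ?addr0 => [|k' /negbTE nk'].
  rewrite (bigD1 a) //= [X in _ + X]big1 ?addr0 ?eqxx // => k /negbTE nk.
  by rewrite eq_sym nk mulr0.
by apply: big1 => k _; rewrite eq_sym in nk'; rewrite nk' andbF mulr0.
Qed.

Variable J : finType.
Lemma sum_sq (N : 'M[C]_#|{: bits J}|) :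
  \sum_(z : plabel J) (\tr (N *m (mx (pauli (C:=C) z))^T)) ^+ 2 =
  2%:R ^+ #|J| * \tr (N *m N).
Proof.
have e : forall z : plabel J, \tr (N *m (mx (pauli (C:=C) z))^T) =
   \sum_j' \sum_j N j' j * pauli z (enum_val j') (enum_val j).
  by move=> z; apply: eq_bigr => j' _; rewrite mxE; apply: eq_bigr => j _; rewrite !mxE.
under eq_bigr do rewrite e expr2 big_distrlr /=.
under eq_bigr do under eq_bigr do under eq_bigr do rewrite big_distrlr /=.
(* order z j' k' j k *)
rewrite exchange_big.
under eq_bigr do rewrite exchange_big.
under eq_bigr do under eq_bigr do rewrite exchange_big.
under eq_bigr do under eq_bigr do under eq_bigr do rewrite exchange_big.
(* order j' k' j k z *)
under eq_bigr do rewrite exchange_big.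
(* order j' j k' k z *)
rewrite /mxtrace mulr_sumr; apply: eq_bigr => j' _; rewrite mxE mulr_sumr; apply: eq_bigr => j _.
transitivity (\sum_k' \sum_k (N j' j * N k' k) * (if (j' == k) && (j == k') then 2%:R ^+ #|J| else 0)).
  apply: eq_bigr => k' _; apply: eq_bigr => k _.
  transitivity (N j' j * N k' k * \sum_z (pauli (C:=C) z (enum_val j') (enum_val j) * pauli z (enum_val k') (enum_val k))).
    by rewrite mulr_sumr; apply: eq_bigr => z _; ring.
  by rewrite pauli_compl !(inj_eq enum_val_inj).
by rewrite sum2_delta; ring.
Qed.
End P1.

Section Main2.
Variable C : numClosedFieldType.
Variable I : finType.
Variable A : {set I}.
Variable psi : bits I -> C.
Variable x : plabel I.

Local Notation M := (coef_mx psi A).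
Local Notation PA := (mx (pauli (C:=C) (prestr A x))).
Local Notation N := (M^t* *m PA *m M).

Lemma card_split : #|I| = (#|A| + #|{: sub (~: A)}|)%N.
Proof. by rewrite card_sig cardsC. Qed.

Lemma pK1 (a : plabel (sub A)) b d : prestr A (gmerge a b d) = a.
Proof. exact: gmergeK1. Qed.
Lemma pK2 (a : plabel (sub A)) b d : prestr (~: A) (gmerge a b d) = b.
Proof. exact: gmergeK2. Qed.

Lemma two_neq0 k : (2%:R ^+ k : C) != 0.
Proof. by rewrite expf_neq0 // pnatr_eq0. Qed.

Lemma part1 :
  pauli_marg psi A (prestr A x) =
  optr (opmul (opmul (reduced psi A) (pauli (prestr A x))) (opmul (reduced psi A) (pauli (prestr A x)))) / 2%:R ^+ #|A|.
Proof.
rewrite /pauli_marg /pauli_distr -mulr_suml.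
have -> := (@sum_marg I A _ _ (false, false) (fun y => optr (opmul (pure psi) (pauli (C:=C) y)) ^+ 2) (prestr A x)).
under eq_bigr => z _ do rewrite (@t_expr C I A psi) pK1 pK2.
rewrite sum_sq S_expr card_split exprD.
have h1 := two_neq0 #|A|; have h2 := two_neq0 #|{: sub (~: A)}|.
by field; apply/andP.
Qed.

Local Notation PB := (mx (pauli (C:=C) (prestr (~: A) x))).

Lemma PAh : PA^t* = PA.
Proof. by apply/matrixP => i j; rewrite !mxE; exact: pauli_herm. Qed.

Lemma PBu : (PB^T)^t* *m PB^T = 1%:M.
Proof.
apply/matrixP => i j; rewrite !mxE.
transitivity (\sum_(k < #|{: bits (sub (~: A))}|) pauli (C:=C) (prestr (~: A) x) (enum_val j) (enum_val k) * pauli (prestr (~: A) x) (enum_val k) (enum_val i)).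
  by apply: eq_bigr => k _; rewrite !mxE ?conjE pauli_herm mulrC.
rewrite -(@sum_enum _ _ (fun t => pauli (C:=C) (prestr (~: A) x) (enum_val j) t * pauli (prestr (~: A) x) t (enum_val i))).
by rewrite pauli_unit (inj_eq enum_val_inj) eq_sym; case: (i == j).
Qed.

End Main2.

Section Core.
Variable C : numClosedFieldType.
Lemma core na nb r (U : 'M[C]_(na, r)) (V : 'M_(r, nb)) (PA : 'M_na) (PB : 'M_nb) :
  V *m V^t* = 1%:M -> PA^t* = PA -> (PB^T)^t* *m PB^T = 1%:M ->
  let N := (U *m V)^t* *m PA *m (U *m V) in
  (\tr (N *m PB^T))^* = \tr (N *m PB^T) ->
  \tr (N *m PB^T) ^+ 2 <= \tr (N *m N) * r%:R /\ 0 <= \tr (N *m N).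
Proof.
move=> VV PAh PBu N treal.
set G := U^t* *m PA *m U.
have NG : N = V^t* *m G *m V by rewrite /N adjM /G !mulmxA.
have k : forall p (X : 'M[C]_(p, r)), X *m V *m V^t* = X by move=> p X; rewrite -mulmxA VV mulmx1.
have GH : G^t* = G by rewrite /G !adjM trmxCK PAh !mulmxA.
clearbody G.
have SG : \tr (N *m N) = \tr (G *m G^t*).
  by rewrite GH NG !mulmxA mxtrace_mulC !mulmxA VV mul1mx k.
set H := V *m (PB^T *m V^t*).
have tG : \tr (N *m PB^T) = \tr (G *m H).
  by rewrite NG /H -!mulmxA mxtrace_mulC !mulmxA.
have HH : \tr (H *m H^t*) <= r%:R.
  have := bessel (PB^T *m V^t*) VV.
  move=> h; apply: le_trans h _.
  rewrite adjM trmxCK mxtrace_mulC !mulmxA -(mulmxA V) PBu mulmx1 VV mxtrace1 //.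
have S0 : 0 <= \tr (N *m N) by rewrite SG tr_adj_ge0.
split=> //.
rewrite expr2 -{2}treal tG SG.
apply: le_trans (trCS G H) _.
by apply: ler_wpM2l; rewrite -?SG.
Qed.
End Core.

Theorem lemma1 (C : numClosedFieldType) (n : nat) (A : {set 'I_n})
    (psi : bits 'I_n -> C) (x : plabel 'I_n) :
  normalized psi ->
  let rhoA := reduced psi A in
  let PA := pauli (C:=C) (prestr A x) in
  let q := optr (opmul (opmul rhoA PA) (opmul rhoA PA)) / 2%:R ^+ #|A| in
  pauli_marg psi A (prestr A x) = q /\
  (optr (opmul (pure psi) (pauli (C:=C) x))) ^+ 2
    / (2%:R ^+ #|A| * (schmidt_rank psi A)%:R) <= q.
Proof.
move=> _ rhoA PA q; split; first exact: part1.
rewrite /q /rhoA /PA S_expr.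
have te := @t_expr C _ A psi x.
have treal := @t_real C _ psi x.
rewrite te in treal.
rewrite te.
set M := coef_mx psi A.
set V := schmidt (row_base M).
have VV : V *m V^t* = 1%:M by apply/unitarymxP; apply: schmidt_unitarymx; exact: rank_leq_col.
have MV : (M <= V)%MS by apply: submx_trans (schmidt_sub _); rewrite eq_row_base.
set U := M *m pinvmx V.
have MUV : U *m V = M by rewrite mulmxKpV.
have := core (U:=U) VV (@PAh C _ A x) (@PBu C _ A x).
rewrite MUV /= => /(_ treal) [h1 h2].
rewrite /schmidt_rank -/M.
set t := \tr _ in h1 *; set S := \tr _ in h1 h2 *.
have h2A : (0 : C) < 2%:R ^+ #|A| by rewrite exprn_gt0 // ltr0n.
have [r0|rpos] := eqVneq (\rank M) 0%N.
  rewrite r0 mulr0 invr0 mulr0; exact: divr_ge0 (ltW h2A).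
have hr : (0 : C) < (\rank M)%:R by rewrite ltr0n lt0n.
rewrite ler_pdivrMr ?mulr_gt0 //.
have -> : S / 2%:R ^+ #|A| * (2%:R ^+ #|A| * (\rank M)%:R) = S * (\rank M)%:R.
  by field; rewrite gt_eqF.
exact: h1.
Qed.
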